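(* Let $G$ be a graph formed from the paw $K_{1,3}+e$ (a triangle together with one pendent edge attached to a vertex of the triangle) by subdividing the pendent edge $0$ or more times. If $L$ is a list-assignment with $|L(v)|\ge\deg(v)+1$ for all $v\in V(G)$ and $\alpha,\beta$ are unfrozen $L$-colourings, then $\alpha\sim\beta$.
   Context: An $L$-colouring is a proper colouring $\varphi$ with $\varphi(v)\in L(v)$ for all $v$. A vertex $v$ is frozen under $\varphi$ if every colour of $L(v)\setminus\{\varphi(v)\}$ appears on a neighbour of $v$; a colouring is unfrozen if at least one vertex is not frozen. $\alpha\sim\beta$ means $\alpha$ can be transformed into $\beta$ by a sequence of single-vertex recolouring steps, each keeping the colouring a proper $L$-colouring. *)

(* Defs.v *)
From mathcomp Require Import all_boot.
From Stdlib Require Import Relations.Relation_Operators.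
Set Implicit Arguments. Unset Strict Implicit. Unset Printing Implicit Defensive.

(* Adjacency of the paw with its pendent edge subdivided k times, on 'I_(k+4):
   vertices 0,1,2 form a triangle; 2 - 3 - 4 - ... - (k+3) is the
   (subdivided) pendent path attached to vertex 2. *)
Definition paw_sub_adj (k : nat) : rel 'I_(k + 4) :=
  fun i j =>
    [|| ((i < 3) && (j < 3) && (i != j)),
        ((3 <= j) && (i.+1 == j)) | ((3 <= i) && (j.+1 == i))].

Definition simple_graph (T : finType) (e : rel T) : Prop :=
  symmetric e /\ irreflexive e.

Definition deg (T : finType) (e : rel T) (v : T) : nat := #|[set u | e v u]|.

Definition L_colouring (T C : finType) (e : rel T) (L : T -> {set C})
  (phi : T -> C) : Prop :=
  (forall v, phi v \in L v) /\ (forall u v, e u v -> phi u != phi v).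

Definition frozen (T C : finType) (e : rel T) (L : T -> {set C})
  (phi : T -> C) (v : T) : Prop :=
  forall c, c \in L v -> c != phi v -> exists u, e v u /\ phi u = c.

Definition unfrozen (T C : finType) (e : rel T) (L : T -> {set C})
  (phi : T -> C) : Prop :=
  exists v, ~ frozen e L phi v.

Definition recolour_step (T C : finType) (e : rel T) (L : T -> {set C})
  (phi psi : T -> C) : Prop :=
  L_colouring e L phi /\ L_colouring e L psi /\
  exists v, forall w, w != v -> phi w = psi w.

Definition reconf (T C : finType) (e : rel T) (L : T -> {set C})
  (alpha beta : T -> C) : Prop :=
  clos_refl_trans (T -> C) (recolour_step e L) alpha beta.

(* Main.v *)
Require Import Defs.
From mathcomp Require Import all_boot zify.
From Stdlib Require Import Relations.Relation_Operators Classical FunctionalExtensionality.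
Set Implicit Arguments. Unset Strict Implicit. Unset Printing Implicit Defensive.

Lemma rtT (X : Type) (R : X -> X -> Prop) (x y z : X) :
  clos_refl_trans X R x y -> clos_refl_trans X R y z -> clos_refl_trans X R x z.
Proof. exact: rt_trans. Qed.
Lemma rtS (X : Type) (R : X -> X -> Prop) (x y : X) : R x y -> clos_refl_trans X R x y.
Proof. exact: rt_step. Qed.
Lemma rtR (X : Type) (R : X -> X -> Prop) (x : X) : clos_refl_trans X R x x.
Proof. exact: rt_refl. Qed.

Lemma card_sub_seq (C : finType) (S : {set C}) (s : seq C) :
  (forall w, w \in S -> w \in s) -> #|S| <= size s.
Proof.
move=> H; apply: leq_trans (card_size s).
by apply: subset_leq_card; apply/subsetP => w /H.
Qed.

Lemma pick_avoid (C : finType) (S : {set C}) (s : seq C) :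
  size s < #|S| -> exists w, w \in S /\ w \notin s.
Proof.
move=> Hs; apply: NNPP => H; move: Hs; rewrite ltnNge card_sub_seq //.
move=> w Hw; apply: NNPP => Hn; apply: H; exists w; split => //; exact/negP.
Qed.

Lemma three_fill (C : finType) (S : {set C}) (a b c w : C) :
  #|S| <= 3 -> a \in S -> b \in S -> c \in S -> a != b -> a != c -> b != c ->
  w \in S -> [|| w == a, w == b | w == c].
Proof.
move=> HS Ha Hb Hc Hab Hac Hbc Hw; apply: NNPP => Hn.
have Hu : uniq [:: w; a; b; c].
  rewrite /= !inE !negb_or Hab Hac Hbc /= andbT.
  by move/negP: Hn; rewrite !negb_or.
have : size [:: w; a; b; c] <= #|S|.
  rewrite -(card_uniqP Hu); apply: subset_leq_card; apply/subsetP => x.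
  by rewrite !inE => /or4P [] /eqP ->.
by move=> /leq_trans /(_ HS).
Qed.

Section K3.
Variable C : finType.

Definition ok3 (A B D : {set C}) (t : C * C * C) : bool :=
  [&& t.1.1 \in A, t.1.2 \in B, t.2 \in D, t.1.1 != t.1.2, t.1.1 != t.2 & t.1.2 != t.2].

Definition step3 A B D (s t : C * C * C) : Prop :=
  ok3 A B D s /\ ok3 A B D t /\
  ((s.1.1 = t.1.1 /\ s.1.2 = t.1.2) \/ (s.1.1 = t.1.1 /\ s.2 = t.2) \/
   (s.1.2 = t.1.2 /\ s.2 = t.2)).

Definition K3 A B D := clos_refl_trans _ (step3 A B D).

Lemma crt_map (X Y : Type) (R : X -> X -> Prop) (R' : Y -> Y -> Prop) (h : X -> Y) :
  (forall s t, R s t -> R' (h s) (h t)) ->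
  forall s t, clos_refl_trans _ R s t -> clos_refl_trans _ R' (h s) (h t).
Proof.
move=> H s t; elim => [x y Hxy|x|x y z _ H1 _ H2].
- by apply: rt_step; apply: H.
- exact: rt_refl.
- exact: rtT H1 H2.
Qed.

Lemma crt_sym (X : Type) (R : X -> X -> Prop) :
  (forall s t, R s t -> R t s) ->
  forall s t, clos_refl_trans _ R s t -> clos_refl_trans _ R t s.
Proof.
move=> H s t; elim => [x y Hxy|x|x y z _ H1 _ H2].
- by apply: rt_step; apply: H.
- exact: rt_refl.
- exact: rtT H2 H1.
Qed.

Lemma K3_sym A B D s t : K3 A B D s t -> K3 A B D t s.
Proof.
apply: crt_sym => s' t' [H1 [H2 H3]]; split => //; split => //.
by case: H3 => [[-> ->]|[[-> ->]|[-> ->]]]; auto.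
Qed.

Lemma K3_ok A B D s t : K3 A B D s t -> ok3 A B D s -> ok3 A B D t.
Proof. by elim => [x y [_ []]|x|x y z _ H1 _ H2] // /H1 /H2. Qed.

Lemma K3_swap12 A B D x y z x' y' z' :
  K3 B A D (y, x, z) (y', x', z') -> K3 A B D (x, y, z) (x', y', z').
Proof.
move=> H.
have := @crt_map _ _ (step3 B A D) (step3 A B D) (fun t => (t.1.2, t.1.1, t.2)) _ _ _ H.
apply => -[[a b] c] [[a' b'] c'] [H1 [H2 H3]]; rewrite /step3 /ok3 /= in H1 H2 H3 *.
move: H1 H2 => /and5P [? ? ? h1 /andP [h2 h3]] /and5P [? ? ? h1' /andP [h2' h3']].
split; first by rewrite (eq_sym b a) h1 h2 h3 /= andbT; apply/and3P.
split; first by rewrite (eq_sym b' a') h1' h2' h3' /= andbT; apply/and3P.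
by case: H3 => [[-> ->]|[[-> ->]|[-> ->]]]; auto.
Qed.

Lemma K3_swap23 A B D x y z x' y' z' :
  K3 A D B (x, z, y) (x', z', y') -> K3 A B D (x, y, z) (x', y', z').
Proof.
move=> H.
have := @crt_map _ _ (step3 A D B) (step3 A B D) (fun t => (t.1.1, t.2, t.1.2)) _ _ _ H.
apply => -[[a b] c] [[a' b'] c'] [H1 [H2 H3]]; rewrite /step3 /ok3 /= in H1 H2 H3 *.
move: H1 H2 => /and5P [? ? ? h1 /andP [h2 h3]] /and5P [? ? ? h1' /andP [h2' h3']].
split; first by rewrite (eq_sym c b) h1 h2 h3 /= andbT; apply/and3P.
split; first by rewrite (eq_sym c' b') h1' h2' h3' /= andbT; apply/and3P.
by case: H3 => [[-> ->]|[[-> ->]|[-> ->]]]; auto.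
Qed.

Lemma K3_swap13 A B D x y z x' y' z' :
  K3 D B A (z, y, x) (z', y', x') -> K3 A B D (x, y, z) (x', y', z').
Proof.
move=> H; apply: K3_swap12; apply: K3_swap23; apply: K3_swap12; exact: H.
Qed.

Lemma st A B D s t : ok3 A B D s -> ok3 A B D t ->
  ((s.1.1 = t.1.1 /\ s.1.2 = t.1.2) \/ (s.1.1 = t.1.1 /\ s.2 = t.2) \/
   (s.1.2 = t.1.2 /\ s.2 = t.2)) -> K3 A B D s t.
Proof. by move=> h1 h2 h3; apply: rt_step. Qed.

End K3.

Ltac okt := rewrite /ok3 /=; repeat (apply/andP; split); try done; try (by rewrite eq_sym).

Section K3b.
Variable C : finType.
Implicit Types A B D : {set C}.

Lemma ok3E A B D x y z : ok3 A B D (x, y, z) ->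
  [/\ x \in A, y \in B, z \in D, x != y & (x != z) && (y != z)].
Proof. by move/and5P. Qed.

Lemma ok3_12 A B D x y z : ok3 A B D (x, y, z) -> ok3 B A D (y, x, z).
Proof. by move/ok3E => [? ? ? ? /andP[? ?]]; okt. Qed.

Lemma ok3_23 A B D x y z : ok3 A B D (x, y, z) -> ok3 A D B (x, z, y).
Proof. by move/ok3E => [? ? ? ? /andP[? ?]]; okt. Qed.

Lemma ok3_13 A B D x y z : ok3 A B D (x, y, z) -> ok3 D B A (z, y, x).
Proof. by move/ok3E => [? ? ? ? /andP[? ?]]; okt. Qed.

Lemma umove A B D x y z x' : 4 <= #|D| -> ok3 A B D (x, y, z) -> x' \in A -> x' != y ->
  exists z1, K3 A B D (x, y, z) (x', y, z1).
Proof.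
move=> hD hs hx hxy; move/ok3E: (hs) => [h1 h2 h3 h4 /andP[h5 h6]].
case: (z =P x') => Hz.
- subst z.
  have [z1 [Hz1 Hn]] := @pick_avoid _ D [:: x; y; x'] hD.
  move: Hn; rewrite !inE !negb_or => /and3P[n1 n2 n3].
  exists z1; apply: (@rtT _ _ _ (x, y, z1)); apply: st => //=; try okt; auto.
- exists z; apply: st => //=; last by auto.
  okt; apply/eqP => E; exact: Hz (esym E).
Qed.

Lemma vmove A B D x y z y' : 4 <= #|D| -> ok3 A B D (x, y, z) -> y' \in B -> y' != x ->
  exists z1, K3 A B D (x, y, z) (x, y', z1).
Proof.
move=> hD hs hy hyx; move/ok3E: (hs) => [h1 h2 h3 h4 /andP[h5 h6]].
case: (z =P y') => Hz.
- subst z.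
  have [z1 [Hz1 Hn]] := @pick_avoid _ D [:: x; y; y'] hD.
  move: Hn; rewrite !inE !negb_or => /and3P[n1 n2 n3].
  exists z1; apply: (@rtT _ _ _ (x, y, z1)); apply: st => //=; try okt; auto.
- exists z; apply: st => //=; last by auto.
  okt; apply/eqP => E; exact: Hz (esym E).
Qed.

Lemma K3big A B D s t : 3 <= #|A| -> 3 <= #|B| -> 4 <= #|D| ->
  ok3 A B D s -> ok3 A B D t -> K3 A B D s t.
Proof.
case: s => [[x y] z]; case: t => [[x' y'] z'] hA hB hD hs ht.
suff : exists z1, K3 A B D (x, y, z) (x', y', z1).
  move=> [z1 H]; apply: (rtT (H)) ; apply: st => //; first exact: K3_ok H hs.
  by left.
move/ok3E: (hs) => [h1 h2 h3 h4 /andP[h5 h6]].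
move/ok3E: (ht) => [g1 g2 g3 g4 /andP[g5 g6]].
case: (x' =P y) => Hx.
- subst x'; case: (y' =P x) => Hy.
  + subst y'.
    have [y2 [Hy2 Hn]] := @pick_avoid _ B [:: x; y] hB.
    move: Hn; rewrite !inE !negb_or => /andP[n1 n2].
    have [z1 H1] := vmove hD hs Hy2 n1.
    have hs1 := K3_ok H1 hs.
    have n2' : y != y2 by rewrite eq_sym.
    have [z2 H2] := umove hD hs1 g1 n2'.
    have hs2 := K3_ok H2 hs1.
    have [z3 H3] := vmove hD hs2 g2 (h4 : x != y).
    by exists z3; apply: rtT H1 (rtT H2 H3).
  + have Hy' : y' != x by apply/eqP.
    have [z1 H1] := vmove hD hs g2 Hy'.
    have hs1 := K3_ok H1 hs.
    have [z2 H2] := umove hD hs1 g1 g4.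
    by exists z2; apply: rtT H1 H2.
- have Hx' : x' != y by apply/eqP.
  have [z1 H1] := umove hD hs g1 Hx'.
  have hs1 := K3_ok H1 hs.
  have g4' : y' != x' by rewrite eq_sym.
  have [z2 H2] := vmove hD hs1 g2 g4'.
  by exists z2; apply: rtT H1 H2.
Qed.

Lemma slice_reach A B D d x y z : 3 <= #|A| -> 3 <= #|B| -> d \in D -> d \notin A ->
  ok3 A B D (x, y, z) -> exists x1 y1, K3 A B D (x, y, z) (x1, y1, d).
Proof.
move=> hA hB hd hdA hs; move/ok3E: (hs) => [h1 h2 h3 h4 /andP[h5 h6]].
have hdx : d != x by apply/eqP => E; move: hdA; rewrite E h1.
case: (d =P y) => Hdy; last first.
  exists x, y; apply: st => //=; last by auto.
  okt; apply/eqP => E; apply: Hdy; by rewrite E.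
subst d.
case: (boolP [exists w, [&& w \in B, w != x, w != y & w != z]]).
- move/existsP => [y' /and4P[hy' n1 n2 n3]].
  exists x, y'; apply: (@rtT _ _ _ (x, y', z)); apply: st => //=; try okt; auto.
- rewrite negb_exists => /forallP Hn.
  have [x'' [hx'' Hn2]] := @pick_avoid _ A [:: x; z] hA.
  move: Hn2; rewrite !inE !negb_or => /andP[m1 m2].
  have hxB : x \in B.
    apply: NNPP => hxB.
    have : #|B| <= size [:: y; z].
      apply: card_sub_seq => w hw; move: (Hn w); rewrite hw /= !inE.
      case: (w =P x) => [E|_]; first by move: hw; rewrite E => /hxB.
      by case: (w =P y); case: (w =P z).
    by move=> H; move: (leq_trans H (isT : size [:: y; z] <= 2)); rewrite leqNgt hB.
  have hx''y : x'' != y by apply/eqP => E; move: hdA; rewrite -E hx''.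
  exists x'', x.
  apply: (@rtT _ _ _ (x'', y, z)); first by apply: st; try okt; auto.
  apply: (@rtT _ _ _ (x'', x, z)); apply: st; try okt; auto.
Qed.

Lemma slice_conn A B D d x y x' y' : 3 <= #|A| -> d \notin A ->
  ok3 A B D (x, y, d) -> ok3 A B D (x', y', d) -> K3 A B D (x, y, d) (x', y', d).
Proof.
move=> hA hdA hs ht.
move/ok3E: (hs) => [h1 h2 h3 h4 /andP[h5 h6]].
move/ok3E: (ht) => [g1 g2 g3 g4 /andP[g5 g6]].
case: (y' =P x) => Hy.
- subst y'.
  have [x1 [hx1 Hn]] := @pick_avoid _ A [:: x; y] hA.
  move: Hn; rewrite !inE !negb_or => /andP[n1 n2].
  have hx1d : x1 != d by apply/eqP => E; move: hdA; rewrite -E hx1.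
  apply: (@rtT _ _ _ (x1, y, d)); first by apply: st; try okt; auto.
  apply: (@rtT _ _ _ (x1, x, d)); apply: st; try okt; auto.
- have Hy' : y' != x by apply/eqP.
  apply: (@rtT _ _ _ (x, y', d)); apply: st; try okt; auto.
Qed.

Lemma K3diff A B D d s t : 3 <= #|A| -> 3 <= #|B| -> d \in D -> d \notin A ->
  ok3 A B D s -> ok3 A B D t -> K3 A B D s t.
Proof.
case: s => [[x y] z]; case: t => [[x' y'] z'] hA hB hd hdA hs ht.
have [x1 [y1 H1]] := slice_reach hA hB hd hdA hs.
have [x2 [y2 H2]] := slice_reach hA hB hd hdA ht.
apply: (rtT (H1)); apply: (rtT _ (K3_sym H2)).
apply: slice_conn => //; [exact: K3_ok H1 hs | exact: K3_ok H2 ht].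
Qed.

Lemma K3main A B D s t : 3 <= #|A| -> 3 <= #|B| -> 3 <= #|D| ->
  ~~ [&& A == B, B == D & #|A| == 3] ->
  ok3 A B D s -> ok3 A B D t -> K3 A B D s t.
Proof.
case: s => [[x y] z]; case: t => [[x' y'] z'] hA hB hD hnd hs ht.
case: (boolP (D \subset A)) => [DA|/subsetPn [d hd hdA]]; last exact: (K3diff hA hB hd hdA hs ht).
case: (boolP (D \subset B)) => [DB|/subsetPn [d hd hdB]].
  2: by apply: K3_swap12; apply: (K3diff hB hA hd hdB); apply: ok3_12.
case: (boolP (A \subset D)) => [AD|/subsetPn [d hd hdD]].
  2: by apply: K3_swap13; apply: (K3diff hD hB hd hdD); apply: ok3_13.
case: (boolP (B \subset D)) => [BD|/subsetPn [d hd hdD]].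
  2: by apply: K3_swap23; apply: K3_swap12; apply: (K3diff hD hA hd hdD);
     apply: ok3_12; apply: ok3_23.
have EA : A = D by apply/eqP; rewrite eqEsubset AD DA.
have EB : B = D by apply/eqP; rewrite eqEsubset BD DB.
subst A B.
case: (leqP 4 #|D|) => h4; first exact: K3big.
by move: hnd; rewrite !eqxx /=; have -> : #|D| = 3 by apply/eqP; rewrite eqn_leq hD -ltnS h4.
Qed.

End K3b.

Definition adjn (n m : nat) : bool :=
  [|| (n < 3) && (m < 3) && (n != m), (3 <= m) && (n.+1 == m) | (3 <= n) && (m.+1 == n)].

Section Paw.
Variables (k : nat) (T : finType) (e : rel T) (Hg : simple_graph e).
Variables (f : 'I_(k + 4) -> T) (g : T -> 'I_(k + 4)) (fK : cancel f g) (gK : cancel g f).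
Variable (Hiso : forall i j, e (f i) (f j) = paw_sub_adj i j).
Variables (C : finType) (L : T -> {set C}).
Variable (HL : forall v, deg e v + 1 <= #|L v|).

Local Notation N := (k + 4).
Local Notation P := (L_colouring e L).
Local Notation rc := (reconf e L).

Definition o0 : 'I_(k + 4) := Ordinal (ltn_addl k (isT : 0 < 4)).
Definition v (n : nat) : T := f (insubd o0 n).

Lemma vK n : n < N -> val (g (v n)) = n.
Proof. by move=> hn; rewrite /v fK insubdK. Qed.

Lemma v_inj n m : n < N -> m < N -> (v n == v m) = (n == m).
Proof.
move=> hn hm; apply/eqP/eqP => [E|->//].
by rewrite -(vK hn) -(vK hm) E.
Qed.

Lemma v_surj u : val (g u) < N /\ u = v (val (g u)).
Proof. by split; [exact: ltn_ord | rewrite /v valKd gK]. Qed.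

Lemma adjE n m : n < N -> m < N -> e (v n) (v m) = adjn n m.
Proof.
move=> hn hm; rewrite /v Hiso /paw_sub_adj -val_eqE /= !insubdK //.
Qed.

Lemma esym u w : e u w -> e w u.
Proof. by case: Hg => Hs _; rewrite Hs. Qed.

Lemma nbr n u : n < N -> e (v n) u -> exists m, [/\ m < N, adjn n m & u = v m].
Proof.
move=> hn; have [hu Eu] := v_surj u; rewrite Eu adjE // => ha.
by exists (val (g u)).
Qed.

Definition upd (phi : T -> C) (w : T) (x : C) : T -> C :=
  fun u => if u == w then x else phi u.

Lemma updE phi n m x : n < N -> m < N ->
  upd phi (v n) x (v m) = if m == n then x else phi (v m).
Proof. by move=> hn hm; rewrite /upd v_inj. Qed.

Lemma P_upd phi w x : P phi -> x \in L w -> (forall u, e w u -> phi u != x) ->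
  P (upd phi w x).
Proof.
move=> [HP1 HP2] hx hfree; split.
- by move=> u; rewrite /upd; case: (u =P w) => [->|].
- move=> u1 u2 he; rewrite /upd.
  case: (u1 =P w) => [E1|N1]; case: (u2 =P w) => [E2|N2].
  + by case: Hg => _ Hirr; move: he; rewrite E1 E2 Hirr.
  + by rewrite eq_sym; apply: hfree; rewrite -E1.
  + by apply: hfree; apply: esym; rewrite -E2.
  + exact: HP2.
Qed.

Lemma rc_step phi psi : P phi -> P psi -> (exists w, forall u, u != w -> phi u = psi u) ->
  rc phi psi.
Proof. by move=> h1 h2 h3; apply: rtS; split => //; split. Qed.

Lemma rc_P phi psi : rc phi psi -> P phi -> P psi.
Proof. by elim => [x y [_ []]|x|x y z _ H1 _ H2] // /H1 /H2. Qed.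

Lemma rc_sym phi psi : rc phi psi -> rc psi phi.
Proof.
apply: crt_sym => x y [h1 [h2 [w hw]]]; split => //; split => //.
by exists w => u /hw ->.
Qed.

Lemma mv phi w x : P phi -> x \in L w -> (forall u, e w u -> phi u != x) ->
  rc phi (upd phi w x) /\ P (upd phi w x).
Proof.
move=> hP hx hf; have hP' := P_upd hP hx hf; split => //.
apply: rc_step => //; exists w => u hu; by rewrite /upd (negbTE hu).
Qed.

Lemma freeI (phi : T -> C) n x : n < N ->
  (forall m, m < N -> adjn n m -> phi (v m) != x) -> forall u, e (v n) u -> phi u != x.
Proof. by move=> hn H u /(nbr hn) [m [hm ha ->]]; apply: H. Qed.

Lemma mvI phi n x : P phi -> n < N -> x \in L (v n) ->
  (forall m, m < N -> adjn n m -> phi (v m) != x) ->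
  rc phi (upd phi (v n) x) /\ P (upd phi (v n) x).
Proof. by move=> hP hn hx H; apply: mv => //; apply: freeI. Qed.

Lemma PL phi n : P phi -> phi (v n) \in L (v n).
Proof. by case. Qed.

Lemma PE phi n m : P phi -> n < N -> m < N -> adjn n m -> phi (v n) != phi (v m).
Proof. by move=> [_ H] hn hm ha; apply: H; rewrite adjE. Qed.

Lemma degge n (s : seq nat) : n < N -> uniq s ->
  (forall m, m \in s -> (m < N) && adjn n m) -> size s <= deg e (v n).
Proof.
move=> hn hu hs; rewrite /deg.
have hu' : uniq (map v s).
  rewrite map_inj_in_uniq // => a b ha hb /eqP.
  move: (hs a ha) (hs b hb) => /andP[ha' _] /andP[hb' _].
  by rewrite v_inj // => /eqP.
rewrite -(size_map v) -(card_uniqP hu'); apply: subset_leq_card.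
apply/subsetP => u /mapP [m hm ->]; rewrite inE.
by move: (hs m hm) => /andP[hm' ha]; rewrite adjE.
Qed.

Lemma LA : 3 <= #|L (v 0)|.
Proof.
apply: leq_trans (HL _); rewrite addn1 ltnS.
apply: (@degge 0 [:: 1; 2]) => //; [lia | move=> m; rewrite !inE => /orP[] /eqP ->; apply/andP; split; rewrite /adjn; lia].
Qed.

Lemma LB : 3 <= #|L (v 1)|.
Proof.
apply: leq_trans (HL _); rewrite addn1 ltnS.
apply: (@degge 1 [:: 0; 2]) => //; [lia | move=> m; rewrite !inE => /orP[] /eqP ->; apply/andP; split; rewrite /adjn; lia].
Qed.

Lemma LC : 4 <= #|L (v 2)|.
Proof.
apply: leq_trans (HL _); rewrite addn1 ltnS.
apply: (@degge 2 [:: 0; 1; 3]) => //; [lia | move=> m; rewrite !inE => /or3P[] /eqP ->; apply/andP; split; rewrite /adjn; lia].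
Qed.

Lemma LP n : 3 <= n -> n.+1 < N -> 3 <= #|L (v n)|.
Proof.
move=> h3 hn; apply: leq_trans (HL _); rewrite addn1 ltnS.
apply: (@degge n [:: n.-1; n.+1]) => //; [lia | rewrite /= !inE; lia | ].
move=> m; rewrite !inE => /orP[] /eqP ->; apply/andP; split; rewrite /adjn; lia.
Qed.


Definition tri (phi : T -> C) : C * C * C := (phi (v 0), phi (v 1), phi (v 2)).
Definition setTri phi (t : C * C * C) : T -> C :=
  upd (upd (upd phi (v 0) t.1.1) (v 1) t.1.2) (v 2) t.2.
Definition Dq q := L (v 2) :\ q.
Definition degen q : bool := [&& L (v 0) == L (v 1), L (v 1) == Dq q & #|L (v 0)| == 3].

Lemma setTriE phi t n : n < N -> setTri phi t (v n) =
  if n == 2 then t.2 else if n == 1 then t.1.2 else if n == 0 then t.1.1 else phi (v n).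
Proof. move=> hn; rewrite /setTri !updE //; lia. Qed.

Lemma setTri3 phi t n : 3 <= n -> n < N -> setTri phi t (v n) = phi (v n).
Proof. move=> h3 hn; rewrite setTriE //; do 3 (rewrite ifN; last lia); done. Qed.

Lemma eq_fun (phi psi : T -> C) : (forall n, n < N -> phi (v n) = psi (v n)) -> phi = psi.
Proof.
move=> H; apply: functional_extensionality => u.
by have [hu ->] := v_surj u; apply: H.
Qed.

Lemma setTri_P phi x y z : P phi -> ok3 (L (v 0)) (L (v 1)) (Dq (phi (v 3))) (x, y, z) ->
  P (setTri phi (x, y, z)).
Proof.
move=> hP /ok3E [h1 h2 h3 h4 /andP[h5 h6]].
move: h3; rewrite !inE => /andP[h3q h3].
split.
- move=> u; have [hu ->] := v_surj u; move: (val (g u)) hu => n hn.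
  rewrite setTriE //=.
  case: (n =P 2) => [->//|_]; case: (n =P 1) => [->//|_]; case: (n =P 0) => [->//|_].
  exact: PL.
- move=> u w; have [hu ->] := v_surj u; have [hw ->] := v_surj w.
  move: (val (g u)) (val (g w)) hu hw => n m hn hm; rewrite adjE // => ha.
  have [hn3|hn3] := ltnP n 3; have [hm3|hm3] := ltnP m 3.
  + rewrite !setTriE //.
    case: n hn hn3 ha => [|[|[|n]]] //= hn hn3;
    case: m hm hm3 => [|[|[|m]]] //= hm hm3 _; by rewrite eq_sym.
  + have [E1 E2] : n = 2 /\ m = 3 by move: ha; rewrite /adjn; lia.
    subst; rewrite [setTri _ _ (v 3)]setTri3 // setTriE //.
  + have [E1 E2] : n = 3 /\ m = 2 by move: ha; rewrite /adjn; lia.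
    by subst; rewrite [setTri _ _ (v 3)]setTri3 // setTriE //= eq_sym.
  + rewrite !setTri3 //; exact: PE.
Qed.

Lemma tri_ok phi : P phi -> ok3 (L (v 0)) (L (v 1)) (Dq (phi (v 3))) (tri phi).
Proof.
move=> hP; rewrite /ok3 /tri /Dq /= !inE !PL // !PE //; rewrite /adjn //; lia.
Qed.

Lemma setTri_tri phi : setTri phi (tri phi) = phi.
Proof.
apply: eq_fun => n hn; rewrite setTriE //.
case: (n =P 2) => [->//|_]; case: (n =P 1) => [->//|_]; by case: (n =P 0) => [->//|_].
Qed.

Lemma tri_setTri phi t : tri (setTri phi t) = t.
Proof. by case: t => [[x y] z]; rewrite /tri !setTriE //=; lia. Qed.

Lemma setTri_setTri phi t t' : setTri (setTri phi t) t' = setTri phi t'.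
Proof.
apply: eq_fun => n hn; rewrite !setTriE //.
by case: (n == 2); case: (n == 1); case: (n == 0).
Qed.

Lemma setTri_v3 phi t : setTri phi t (v 3) = phi (v 3).
Proof. rewrite setTri3 //; lia. Qed.

Lemma transfer q s t : K3 (L (v 0)) (L (v 1)) (Dq q) s t ->
  forall phi, P phi -> phi (v 3) = q -> tri phi = s -> rc phi (setTri phi t).
Proof.
elim => [s1 t1 [hs [ht hd]]|s1|s1 m1 t1 _ IH1 _ IH2] phi hP hq hs1.
- have h0 : 0 < N by lia. have h1 : 1 < N by lia. have h2 : 2 < N by lia.
  case: t1 ht hd => [[x y] z] ht hd.
  have hP' : P (setTri phi (x, y, z)) by apply: setTri_P => //; rewrite hq.
  apply: rc_step => //.
  have Hsurj : forall u, exists2 n, n < N & u = v n.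
    by move=> u; have [? ?] := v_surj u; eexists; eauto.
  rewrite -hs1 /tri /= in hd.
  case: hd => [[E1 E2]|[[E1 E2]|[E1 E2]]].
  + exists (v 2) => u; have [n hn ->] := Hsurj u; rewrite v_inj // => hn2.
    by rewrite setTriE // (negbTE hn2); case: (n =P 1) => [->//|_]; case: (n =P 0) => [->//|_].
  + exists (v 1) => u; have [n hn ->] := Hsurj u; rewrite v_inj // => hn2.
    by rewrite setTriE // (negbTE hn2); case: (n =P 2) => [->//|_]; case: (n =P 0) => [->//|_].
  + exists (v 0) => u; have [n hn ->] := Hsurj u; rewrite v_inj // => hn2.
    by rewrite setTriE // (negbTE hn2); case: (n =P 2) => [->//|_]; case: (n =P 1) => [->//|_].
- by rewrite -hs1 setTri_tri; apply: rtR.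
- have H1 := IH1 phi hP hq hs1.
  have hP1 := rc_P H1 hP.
  have H2 := IH2 _ hP1 (etrans (setTri_v3 _ _) hq) (tri_setTri _ _).
  rewrite setTri_setTri in H2; exact: rtT H1 H2.
Qed.

Lemma triK phi t : P phi -> ~~ degen (phi (v 3)) ->
  ok3 (L (v 0)) (L (v 1)) (Dq (phi (v 3))) t ->
  rc phi (setTri phi t) /\ P (setTri phi t).
Proof.
move=> hP hnd ht.
have hK : K3 (L (v 0)) (L (v 1)) (Dq (phi (v 3))) (tri phi) t.
  apply: K3main => //; [exact: LA | exact: LB | | exact: tri_ok].
  rewrite /Dq; move: LC; rewrite (cardsD1 (phi (v 3))); case: (_ \in _) => /=; lia.
have H := transfer hK hP erefl erefl.
by split => //; apply: rc_P H hP.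
Qed.


Definition good phi := ~~ degen (phi (v 3)).
Definition mov phi w := exists x, [/\ x \in L w, x != phi w & forall u, e w u -> phi u != x].

Lemma nf_mov phi w : ~ frozen e L phi w -> mov phi w.
Proof.
move=> H; apply: NNPP => H1; apply: H => c hc hne; apply: NNPP => H2; apply: H1.
exists c; split => // u hu; apply/eqP => E; apply: H2; by exists u.
Qed.

Lemma notmov phi w : ~ mov phi w -> forall x, x \in L w -> x != phi w -> exists u, e w u /\ phi u = x.
Proof.
move=> H x hx hne; apply: NNPP => H2; apply: H; exists x; split => // u hu.
apply/eqP => E; apply: H2; by exists u.
Qed.

Lemma degen_in q : degen q -> q \in L (v 2).
Proof.
case/and3P => /eqP E1 /eqP E2 /eqP E3.
move: LC; rewrite (cardsD1 q) -/(Dq q) -E2 -E1 E3; case: (q \in L (v 2)) => //.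
Qed.

Lemma degen_unique q q' : degen q -> degen q' -> q = q'.
Proof.
move=> hq hq'; have i1 := degen_in hq; have i2 := degen_in hq'.
move: hq hq' => /and3P [_ /eqP E1 _] /and3P [_ /eqP E2 _].
apply: NNPP => hne.
have : q \in Dq q' by rewrite !inE i1 andbT; apply/eqP.
by rewrite -E2 E1 !inE eqxx.
Qed.

Lemma degen_frozen phi n : P phi -> degen (phi (v 3)) -> n <= 2 -> ~ mov phi (v n).
Proof.
move=> hP hd hn [x [hx hne hfr]].
have h3 : 3 < N by lia.
move: (hd) => /and3P [/eqP E1 /eqP E2 /eqP E3].
have a0 : phi (v 0) \in L (v 0) by apply: PL.
have a1 : phi (v 1) \in L (v 0) by rewrite E1; apply: PL.
have a2 : phi (v 2) \in L (v 0).
  rewrite E1 E2 !inE PL // andbT; apply: PE => //; rewrite /adjn; lia.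
have d01 : phi (v 0) != phi (v 1) by apply: PE => //; rewrite /adjn; lia.
have d02 : phi (v 0) != phi (v 2) by apply: PE => //; rewrite /adjn; lia.
have d12 : phi (v 1) != phi (v 2) by apply: PE => //; rewrite /adjn; lia.
have hf : forall m, m < N -> adjn n m -> phi (v m) != x.
  by move=> m hm ha; apply: hfr; rewrite adjE //; lia.
have hxS : x \in L (v 0).
  move: hn; rewrite leq_eqVlt ltnS leq_eqVlt ltnS leqn0 => /or3P [] /eqP En; subst n => //.
  - rewrite E1 E2 !inE hx andbT eq_sym; apply: hf => //; rewrite /adjn; lia.
  - by rewrite E1.
have := three_fill (eq_leq E3) a0 a1 a2 d01 d02 d12 hxS.
move: hn; rewrite leq_eqVlt ltnS leq_eqVlt ltnS leqn0 => /or3P [] /eqP En; subst n.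
- have f0 := hf 0 ltac:(lia) isT; have f1 := hf 1 ltac:(lia) isT.
  by rewrite (negbTE hne) ![x == _]eq_sym (negbTE f0) (negbTE f1).
- have f0 := hf 0 ltac:(lia) isT; have f2 := hf 2 ltac:(lia) isT.
  by rewrite (negbTE hne) ![x == _]eq_sym (negbTE f0) (negbTE f2).
- have f1 := hf 1 ltac:(lia) isT; have f2 := hf 2 ltac:(lia) isT.
  by rewrite (negbTE hne) ![x == _]eq_sym (negbTE f1) (negbTE f2).
Qed.



Lemma nbr_path j u : 3 <= j -> j < N -> e (v j) u ->
  exists m, [/\ m < N, u = v m & m = j.-1 \/ m = j.+1].
Proof.
move=> h3 hj /(nbr hj) [m [hm ha ->]]; exists m; split => //.
move: ha; rewrite /adjn; lia.
Qed.

Lemma prop n : forall phi, P phi -> n.+3 < N -> mov phi (v n.+3) ->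
  exists phi', [/\ rc phi phi', P phi' & phi' (v 3) != phi (v 3)].
Proof.
elim: n => [|n IH] phi hP hn hm.
- case: hm => x [hx hne hfr].
  have [H1 H2] := mv hP hx hfr.
  by exists (upd phi (v 3) x); split => //; rewrite /upd eqxx.
- case: (classic (mov phi (v n.+3))) => hm3; first by apply: IH => //; lia.
  case: hm => y [hy hne hfr].
  have [H1 H2] := mv hP hy hfr.
  set phi1 := upd phi (v n.+4) y in H1 H2.
  have hL := @LP n.+3 isT hn.
  have [a [ha hna]] := @pick_avoid _ (L (v n.+3)) [:: phi (v n.+3); phi (v n.+2)] hL.
  move: hna; rewrite !inE negb_or => /andP [na1 na2].
  have [u [hu Eu]] := notmov hm3 ha na1.
  have [m [hmN Eum hm']] := nbr_path (j:=n.+3) isT (ltnW hn) hu.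
  have Ea : a = phi (v n.+4).
    case: hm' => Em; subst m u; last by rewrite -Eu.
    by move: na2; rewrite -Eu eqxx.
  move: ha na1 na2; rewrite Ea => ha na1 na2.
  have hmov : mov phi1 (v n.+3).
    exists (phi (v n.+4)); split.
    + done.
    + rewrite /phi1 updE //; last lia.
      rewrite ifN //; lia.
    + move=> u' hu'; have [m' [hm'N Eu' hm'']] := nbr_path (j:=n.+3) isT (ltnW hn) hu'.
      subst u'; rewrite /phi1 updE //.
      case: hm'' => ->; last by rewrite eqxx.
      by rewrite /= ifN; [rewrite eq_sym | lia].
  have [phi' [R1 P1 N1]] := IH phi1 H2 (ltnW hn) hmov.
  exists phi'; split => //; first exact: rtT H1 R1.
  by move: N1; rewrite /phi1 updE //; lia.
Qed.

Lemma reach_good alpha : P alpha -> unfrozen e L alpha ->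
  exists alpha', [/\ rc alpha alpha', P alpha' & good alpha'].
Proof.
move=> hP [w hw].
case: (boolP (good alpha)) => hg; first by exists alpha; split => //; apply: rtR.
move: hg; rewrite /good negbK => hd.
have hm := nf_mov hw.
have [hwN Ew] := v_surj w; move: hm; rewrite Ew; move: (val (g w)) hwN => n hn hm.
case: (leqP n 2) => hn2; first by case: (degen_frozen hP hd hn2 hm).
have [n' En] : exists n', n = n'.+3 by exists (n - 3); lia.
subst n.
have [phi' [R1 P1 N1]] := prop hP hn hm.
exists phi'; split => //; apply/negP => hd'.
by move: N1; rewrite (degen_unique hd' hd) eqxx.
Qed.



Lemma updN phi n m x : n < N -> m < N -> m != n -> upd phi (v n) x (v m) = phi (v m).
Proof. by move=> hn hm hmn; rewrite updE // (negbTE hmn). Qed.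

Lemma updS phi w x : upd phi w x w = x.
Proof. by rewrite /upd eqxx. Qed.

Lemma tri_avoid q q2 : exists t, ok3 (L (v 0)) (L (v 1)) (Dq q) t /\ t.2 != q2.
Proof.
have [z [hz hnz]] := @pick_avoid _ (L (v 2)) [:: q; q2] (leq_trans (isT : 2 < 4) LC).
have [x0 [hx0 hnx]] := @pick_avoid _ (L (v 0)) [:: z] (leq_trans (isT : 1 < 3) LA).
have [y0 [hy0 hny]] := @pick_avoid _ (L (v 1)) [:: x0; z] LB.
move: hnz hnx hny; rewrite !inE !negb_or => /andP[n1 n2] n3 /andP[n4 n5].
exists (x0, y0, z); split => //; rewrite /ok3 /Dq /= !inE hx0 hy0 hz n1 n3 n5 /=.
by rewrite eq_sym n4.
Qed.

Lemma adj3 m : adjn 3 m -> m = 2 \/ m = 4.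
Proof. rewrite /adjn; lia. Qed.
Lemma adj4 m : adjn 4 m -> m = 3 \/ m = 5.
Proof. rewrite /adjn; lia. Qed.

Definition LiftS i := forall rho, P rho -> good rho ->
  forall j x, i <= j -> j < N -> x \in L (v j) ->
  (forall m, i <= m -> m < N -> adjn j m -> rho (v m) != x) ->
  exists rho', [/\ rc rho rho', P rho', good rho', rho' (v j) = x &
     forall m, i <= m -> m < N -> m != j -> rho' (v m) = rho (v m)].

Lemma Lift4 : LiftS 4.
Proof.
move=> rho hP hg j x h4 hj hx hfr.
case: (x =P rho (v j)) => [Ex|hxne].
  by exists rho; split => //; exact: rtR.
have h3N : 3 < N by lia.
have h2N : 2 < N by lia.
case: (boolP ((4 < j) || (rho (v 3) != x))) => hc.
- have hfree : forall m, m < N -> adjn j m -> rho (v m) != x.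
    move=> m hm ha; case: (leqP 4 m) => hm4; first exact: hfr.
    have [E1 E2] : m = 3 /\ j = 4 by move: ha; rewrite /adjn; lia.
    by subst; move: hc; rewrite ltnn.
  have [H1 H2] := mvI hP hj hx hfree.
  exists (upd rho (v j) x); split => //.
  + by rewrite /good updN //; lia.
  + by rewrite updS.
  + by move=> m hm4 hm hmj; rewrite updN.
- move: hc; rewrite negb_or negbK -leqNgt => /andP [hj4 /eqP hq].
  have Ej : j = 4 by lia.
  subst j.
  set gc := rho (v 4).
  have hL3 := @LP 3 isT hj.
  have hfr5 : forall m, m < N -> m = 5 -> rho (v m) != x.
    by move=> m hm Em; subst m; apply: hfr => //; rewrite /adjn; lia.
  case: (boolP [exists q2, [&& q2 \in L (v 3), q2 != x, q2 != gc & ~~ degen q2]]).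
  + move/existsP => [q2 /and4P [hq2 n1 n2 ng]].
    have [[[x0 y0] z] [ht hz]] := tri_avoid x q2.
    have ht' : ok3 (L (v 0)) (L (v 1)) (Dq (rho (v 3))) (x0, y0, z) by rewrite hq.
    have [R1 P1] := triK hP hg ht'.
    set rho1 := setTri rho (x0, y0, z) in R1 P1.
    have r1 : forall m, 3 <= m -> m < N -> rho1 (v m) = rho (v m).
      by move=> m h3 hm; rewrite /rho1 setTri3.
    have r12 : rho1 (v 2) = z by rewrite /rho1 setTriE.
    have hfR2 : forall m, m < N -> adjn 3 m -> rho1 (v m) != q2.
      move=> m hm ha; have := adj3 ha.
      by case=> ->; [rewrite r12 | rewrite r1 // eq_sym].
    have [R2 P2] := mvI P1 h3N hq2 hfR2.
    set rho2 := upd rho1 (v 3) q2 in R2 P2.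
    have hfR3 : forall m, m < N -> adjn 4 m -> rho2 (v m) != x.
      move=> m hm ha; have := adj4 ha.
      case=> Em; subst m; first by rewrite /rho2 updS.
      by rewrite /rho2 updN // r1 //; apply: hfr5.
    have [R3 P3] := mvI P2 hj hx hfR3.
    exists (upd rho2 (v 4) x); split.
    * exact: rtT R1 (rtT R2 R3).
    * exact: P3.
    * by rewrite /good updN // /rho2 updS.
    * by rewrite updS.
    * move=> m hm4 hm hm4'; rewrite updN // /rho2 updN //; last by clear -hm4; lia.
      by rewrite r1 //; clear -hm4; lia.
  + rewrite negb_exists => /forallP hall.
    have [r [hr hnr]] := @pick_avoid _ (L (v 3)) [:: x; gc] hL3.
    move: hnr; rewrite !inE negb_or => /andP [nr1 nr2].
    have hdr : degen r by move: (hall r); rewrite hr nr1 nr2 /= negbK.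
    have hgc3 : gc \in L (v 3).
      apply: NNPP => hng.
      have : #|L (v 3)| <= size [:: x; r].
        apply: card_sub_seq => w hw; rewrite !inE.
        case: (w =P x) => // nx; case: (w =P gc) => [Ew|nw]; first by move: hw; rewrite Ew => /hng.
        have : degen w.
          apply: NNPP => hnd; move: (hall w); rewrite hw /=; case/negP.
          by apply/and3P; split; [apply/eqP | apply/eqP | apply/negP].
        by move/degen_unique => /(_ _ hdr) ->; rewrite eqxx orbT.
      by clear -hL3; rewrite /=; lia.
    move: (hdr) => /and3P [/eqP E1 /eqP E2 /eqP E3].
    have hc2 : forall (s0 : seq C), size s0 <= 2 -> size s0 < #|L (v 0)|.
      by move=> s0; rewrite E3.
    have [s [hs hns]] := @pick_avoid _ (L (v 0)) [:: x; gc] (hc2 [:: x; gc] isT).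
    have [sa [hsa hnsa]] := @pick_avoid _ (L (v 0)) [:: s] (hc2 [:: s] isT).
    have [sb [hsb hnsb]] := @pick_avoid _ (L (v 0)) [:: s; sa] (hc2 [:: s; sa] isT).
    move: hns hnsa hnsb; rewrite !inE !negb_or => /andP[ns1 ns2] ns3 /andP[ns4 ns5].
    have hsDr : s \in Dq r by rewrite -E2 -E1.
    have hsr : s != r by move: hsDr; rewrite !inE => /andP[].
    have hs2 : s \in L (v 2) by move: hsDr; rewrite !inE => /andP[].
    have ht : ok3 (L (v 0)) (L (v 1)) (Dq (rho (v 3))) (sa, sb, s).
      rewrite /ok3 /Dq /= !inE hsa -E1 hsb hs2 hq ns1 eq_sym ns3 eq_sym ns4 /=.
      by rewrite eq_sym ns5.
    have [R1 P1] := triK hP hg ht.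
    set rho1 := setTri rho (sa, sb, s) in R1 P1.
    have r1 : forall m, 3 <= m -> m < N -> rho1 (v m) = rho (v m).
      by move=> m h3 hm; rewrite /rho1 setTri3.
    have r12 : rho1 (v 2) = s by rewrite /rho1 setTriE.
    have hfR2 : forall m, m < N -> adjn 3 m -> rho1 (v m) != r.
      move=> m hm ha; have := adj3 ha.
      by case=> ->; [rewrite r12 | rewrite r1 // eq_sym].
    have [R2 P2] := mvI P1 h3N hr hfR2.
    set rho2 := upd rho1 (v 3) r in R2 P2.
    have hfR3 : forall m, m < N -> adjn 4 m -> rho2 (v m) != x.
      move=> m hm ha; have := adj4 ha.
      case=> Em; subst m; first by rewrite /rho2 updS.
      by rewrite /rho2 updN // r1 //; apply: hfr5.
    have [R3 P3] := mvI P2 hj hx hfR3.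
    set rho3 := upd rho2 (v 4) x in R3 P3.
    have hfR4 : forall m, m < N -> adjn 3 m -> rho3 (v m) != gc.
      move=> m hm ha; have := adj3 ha.
      case=> ->; last by rewrite /rho3 updS; apply/eqP.
      by rewrite /rho3 updN // /rho2 updN // r12.
    have [R4 P4] := mvI P3 h3N hgc3 hfR4.
    exists (upd rho3 (v 3) gc); split.
    * exact: rtT R1 (rtT R2 (rtT R3 R4)).
    * exact: P4.
    * rewrite /good updS; apply/negP => /degen_unique /(_ hdr) E.
      by move: nr2; rewrite E eqxx.
    * by rewrite updN // /rho3 updS.
    * move=> m hm4 hm hm4'; rewrite updN //; last by clear -hm4; lia.
      rewrite /rho3 updN // /rho2 updN //; last by clear -hm4; lia.
      by rewrite r1 //; clear -hm4; lia.
Qed.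



Lemma adjp j m : 3 <= j -> adjn j m -> m = j.-1 \/ m = j.+1.
Proof. rewrite /adjn; lia. Qed.

Lemma LiftS_succ i : 4 <= i -> LiftS i -> LiftS i.+1.
Proof.
move=> hi4 IH rho hP hg j x hij hj hx hfr.
case: (boolP ((i.+1 < j) || (rho (v i) != x))) => hc.
- have hfr' : forall m, i <= m -> m < N -> adjn j m -> rho (v m) != x.
    move=> m him hm ha; case: (m =P i) => [Em|nm].
    + subst m; move: hc; have -> : j = i.+1.
        by move: ha; rewrite /adjn; clear -hij hi4; lia.
      by rewrite ltnn.
    + apply: hfr => //; clear -him nm; lia.
  have [rho' [R1 P1 G1 E1 A1]] := IH rho hP hg j x (ltnW hij) hj hx hfr'.
  exists rho'; split => // m hm1 hm hmj; apply: A1 => //; exact: ltnW.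
- move: hc; rewrite negb_or negbK -leqNgt => /andP [hj1 /eqP hq].
  have Ej : j = i.+1 by clear -hj1 hij; lia.
  subst j.
  case: (x =P rho (v i.+1)) => [Ex|hxne].
    by exists rho; split => //; exact: rtR.
  set gc := rho (v i.+1).
  have hiN : i < N by clear -hj; lia.
  have hL := @LP i (leq_trans (isT : 3 <= 4) hi4) hj.
  have [h [hh hnh]] := @pick_avoid _ (L (v i)) [:: x; gc] hL.
  move: hnh; rewrite !inE negb_or => /andP [nh1 nh2].
  have hf1 : forall m, i <= m -> m < N -> adjn i m -> rho (v m) != h.
    move=> m him hm ha; have Em : m = i.+1.
      by move: ha; rewrite /adjn; clear -him hi4; lia.
    by subst m; rewrite eq_sym.
  have [rho1 [R1 P1 G1 E1 A1]] := IH rho hP hg i h (leqnn i) hiN hh hf1.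
  have hf2 : forall m, i <= m -> m < N -> adjn i.+1 m -> rho1 (v m) != x.
    move=> m him hm ha; case: (m =P i) => [Em|nm].
      by subst m; rewrite E1.
    have Em : m = i.+2 by move: ha; rewrite /adjn; clear -him nm hi4; lia.
    subst m; rewrite A1 //; last by clear; lia.
    by apply: hfr => //; rewrite /adjn; clear; lia.
  have [rho2 [R2 P2 G2 E2 A2]] := IH rho1 P1 G1 i.+1 x (leqnSn i) hj hx hf2.
  exists rho2; split => //; first exact: rtT R1 R2.
  move=> m hm1 hm hmj; rewrite A2 //; last exact: ltnW.
  rewrite A1 //; [exact: ltnW | clear -hm1; lia].
Qed.

Lemma Lift i : 4 <= i -> LiftS i.
Proof.
elim: i => [//|i IHi] hi.
case: (leqP i 3) => h.
- have -> : i.+1 = 4 by clear -hi h; lia.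
  exact: Lift4.
- by apply: LiftS_succ => //; apply: IHi.
Qed.

Section FixT.
Variable tau : T -> C.
Hypothesis hPt : P tau.

Lemma FixS n : forall rho, P rho -> good rho -> exists rho', [/\ rc rho rho', P rho', good rho' &
  forall m, N - n <= m -> m < N -> 4 <= m -> rho' (v m) = tau (v m)].
Proof.
elim: n => [|n IH] rho hP hg.
  exists rho; split => //; first exact: rtR.
  by move=> m h1 h2; clear -h1 h2; lia.
have [rho1 [R1 P1 G1 A1]] := IH rho hP hg.
case: (leqP 4 (N - n.+1)) => h.
- set i := N - n.+1.
  have hiN : i < N by rewrite /i; clear -h; lia.
  have hfr : forall m, i <= m -> m < N -> adjn i m -> rho1 (v m) != tau (v i).
    move=> m him hm ha; have Em : m = i.+1.
      by move: ha; rewrite /adjn; clear -him h; lia.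
    subst m; rewrite A1 //; last by rewrite /i; clear -h; lia.
    + apply: PE => //; rewrite /adjn; clear -h; lia.
    + by rewrite /i; clear -h hm; lia.
  have [rho' [R2 P2 G2 E2 A2]] := Lift h P1 G1 (leqnn i) hiN (PL i hPt) hfr.
  exists rho'; split => //; first exact: rtT R1 R2.
  move=> m h1 h2 h3; case: (m =P i) => [->//|nm].
  have nm' : m != i by apply/eqP.
  have him : N - n <= m by move: h1 nm'; rewrite /i; clear; lia.
  by rewrite A2 //; apply: A1.
- exists rho1; split => // m h1 h2 h3; apply: A1 => //; clear -h h3; lia.
Qed.

Lemma goodconn rho : P rho -> good rho -> good tau -> rc rho tau.
Proof.
move=> hP hg hgt.
have [rho1 [R1 P1 G1 A1]] := FixS k hP hg.
have A1' : forall m, 4 <= m -> m < N -> rho1 (v m) = tau (v m).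
  by move=> m h4 hm; apply: A1 => //; clear -h4; lia.
have h3N : 3 < N by lia.
have [[[x0 y0] z] [ht hz]] := tri_avoid (rho1 (v 3)) (tau (v 3)).
have [R2 P2] := triK P1 G1 ht.
set rho2 := setTri rho1 (x0, y0, z) in R2 P2.
have hf3 : forall m, m < N -> adjn 3 m -> rho2 (v m) != tau (v 3).
  move=> m hm ha; have := adj3 ha; case=> Em; subst m.
  - by rewrite /rho2 setTriE.
  - rewrite /rho2 setTri3 // A1' //; apply: PE => //.
have [R3 P3] := mvI P2 h3N (PL 3 hPt) hf3.
set rho3 := upd rho2 (v 3) (tau (v 3)) in R3 P3.
have E3 : rho3 (v 3) = tau (v 3) by rewrite /rho3 updS.
have G3 : good rho3 by rewrite /good E3.
have ht4 : ok3 (L (v 0)) (L (v 1)) (Dq (rho3 (v 3))) (tri tau) by rewrite E3; apply: tri_ok.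
have [R4 P4] := triK P3 G3 ht4.
have -> : tau = setTri rho3 (tri tau).
  apply: eq_fun => n hn; rewrite setTriE //.
  case: (n =P 2) => [->//|n2]; case: (n =P 1) => [->//|n1]; case: (n =P 0) => [->//|n0].
  case: (n =P 3) => [->//|n3].
  rewrite /rho3 updN //; last by apply/eqP.
  rewrite /rho2 setTri3 //; last by clear -n0 n1 n2; lia.
  rewrite A1' //; clear -n0 n1 n2 n3; lia.
exact: rtT R1 (rtT R2 (rtT R3 R4)).
Qed.

End FixT.

Lemma main_sec alpha beta : P alpha -> P beta -> unfrozen e L alpha -> unfrozen e L beta ->
  rc alpha beta.
Proof.
move=> ha hb hua hub.
have [a' [Ra Pa Ga]] := reach_good ha hua.
have [b' [Rb Pb Gb]] := reach_good hb hub.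
apply: rtT Ra _; apply: rtT (goodconn Pb Pa Ga Gb) _.
exact: rc_sym Rb.
Qed.

End Paw.

Theorem mainTheorem16 (k : nat) (T : finType) (e : rel T)
  (Hg : simple_graph e)
  (f : 'I_(k + 4) -> T) (Hf : bijective f)
  (Hiso : forall i j, e (f i) (f j) = paw_sub_adj i j)
  (C : finType) (L : T -> {set C})
  (HL : forall v, deg e v + 1 <= #|L v|)
  (alpha beta : T -> C)
  (Ha : L_colouring e L alpha) (Hb : L_colouring e L beta)
  (Hau : unfrozen e L alpha) (Hbu : unfrozen e L beta) :
  reconf e L alpha beta.
Proof.
case: Hf => g fK gK.
exact: (main_sec Hg fK gK Hiso HL Ha Hb Hau Hbu).
Qed.
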